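(* For any $\epsilon>0$, there is no $(\frac56+\epsilon)$-approximation algorithm for \textsc{MaxUSReco[tjar]} in the value-oracle model making at most $e^{\epsilon^2 n/2}$ oracle calls; i.e., no algorithm that, given value-oracle access to any submodular $f:2^{[n]}\to\mathbb{R}_+$ and any $X,Y\subseteq[n]$, makes at most $e^{\epsilon^2 n/2}$ queries and always outputs a reconfiguration sequence $\mathcal{S}$ from $X$ to $Y$ under tjar with $f(\mathcal{S})\ge(\frac56+\epsilon)f(\mathcal{S}^* )$, where $\mathcal{S}^*$ is an optimal such sequence.
   Context: $f$ is submodular if $f(S)+f(T)\ge f(S\cap T)+f(S\cup T)$. A value oracle returns $f(S)$ on query $S$. Two sets are adjacent under tjar if either they have the same size $s$ and intersection of size $s-1$, or their symmetric difference has size $1$. A reconfiguration sequence from $X$ to $Y$ under tjar is a sequence of sets from $X$ to $Y$ with consecutive sets adjacent; its value is the minimum of $f$ over its sets. \textsc{MaxUSReco[tjar]} asks for such a sequence maximizing the value. *)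

(* Defs.v *)
From HB Require Import structures.
From mathcomp Require Import all_boot all_order all_algebra.
From mathcomp Require Import reals sequences exp.
Set Implicit Arguments. Unset Strict Implicit. Unset Printing Implicit Defensive.
Import Order.TTheory GRing.Theory Num.Theory.
Local Open Scope ring_scope.

Section Defs.
Variable R : realType.

Definition submodular n (f : {set 'I_n} -> R) : Prop :=
  forall S T : {set 'I_n}, f (S :&: T) + f (S :|: T) <= f S + f T.

Definition nonneg n (f : {set 'I_n} -> R) : Prop := forall S, 0 <= f S.

Definition tjar_adj n (A B : {set 'I_n}) : bool :=
  ((#|A| == #|B|) && (#|A :&: B|.+1 == #|A|))
  || (#|(A :\: B) :|: (B :\: A)| == 1)%N.

Definition is_reco n (X Y : {set 'I_n}) (S : seq {set 'I_n}) : Prop :=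
  exists s, S = X :: s /\ path (@tjar_adj n) X s /\ last X s = Y.

Definition seqval n (f : {set 'I_n} -> R) (S : seq {set 'I_n}) : R :=
  match S with
  | [::] => 0
  | x :: s => foldr (fun y m => Num.min (f y) m) (f x) s
  end.

(* Deterministic adaptive algorithms in the value-oracle model on [n]:
   decision trees that query f(S) and branch on the answer, or output a
   sequence of sets. *)
Inductive alg (n : nat) : Type :=
| Query : {set 'I_n} -> (R -> alg n) -> alg n
| Output : seq {set 'I_n} -> alg n.

Fixpoint run n (f : {set 'I_n} -> R) (t : alg n) : seq {set 'I_n} * nat :=
  match t with
  | Query Q k => let r := run f (k (f Q)) in (r.1, r.2.+1)
  | Output s => (s, 0%N)
  end.

End Defs.

(* Main.v *)
Require Import Defs.
From HB Require Import structures.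
From mathcomp Require Import all_boot all_order all_algebra.
From mathcomp Require Import reals sequences exp.
From mathcomp Require Import lra zify ring.
Import Order.TTheory GRing.Theory Num.Theory.
Local Open Scope ring_scope.

Set Implicit Arguments. Unset Strict Implicit. Unset Printing Implicit Defensive.

Section Gen.
Variable R : realType.

Fixpoint qs n (f : {set 'I_n} -> R) (t : alg R n) : seq {set 'I_n} :=
  match t with
  | Query Q k => Q :: qs f (k (f Q))
  | Output _ => [::]
  end.

Lemma qs_size n (f : {set 'I_n} -> R) t : size (qs f t) = (run f t).2.
Proof. by elim: t => [Q k IH|s] //=; rewrite IH. Qed.

Lemma run_agree n (f g : {set 'I_n} -> R) t :
  (forall Q, Q \in qs g t -> f Q = g Q) -> run f t = run g t.
Proof.
elim: t => [Q k IH|s] //= H.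
have -> : f Q = g Q by apply: H; rewrite inE eqxx.
rewrite IH // => Q' HQ'; apply: H; by rewrite inE HQ' orbT.
Qed.

Lemma seqval_le n (f : {set 'I_n} -> R) x s y :
  y \in x :: s -> seqval f (x :: s) <= f y.
Proof.
rewrite /=; elim: s y => [|z s IH] y /=.
  by rewrite inE => /eqP ->.
rewrite !inE => /or3P [/eqP->|/eqP->|Hy].
- by rewrite ge_min; apply/orP; right; apply: IH; rewrite inE eqxx.
- by rewrite ge_min lexx.
- by rewrite ge_min; apply/orP; right; apply: IH; rewrite inE Hy orbT.
Qed.

Lemma seqval_ge n (f : {set 'I_n} -> R) x s L :
  (forall y, y \in x :: s -> L <= f y) -> L <= seqval f (x :: s).
Proof.
rewrite /=; elim: s => [|z s IH] H /=; first by apply: H; rewrite inE eqxx.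
rewrite le_min; apply/andP; split; first by apply: H; rewrite !inE eqxx orbT.
apply: IH => y; rewrite inE => /orP [/eqP->|Hy]; apply: H; rewrite !inE ?eqxx //.
by rewrite Hy !orbT.
Qed.

Lemma crossing (T : eqType) (r : rel T) (D : T -> R) x s :
  (forall y z, r y z -> `|D y - D z| <= 2) ->
  path r x s -> -1 < D x -> D (last x s) <= 0 ->
  exists2 y, y \in x :: s & `|D y| <= 1.
Proof.
move=> Hr; elim: s x => [|z s IH] x /=.
  move=> _ H1 H2; exists x; first by rewrite inE eqxx.
  by rewrite ler_norml; apply/andP; split; lra.
move=> /andP [Hxz Hp] H1 H2.
have [Hx|Dx] := lerP (D x) 1.
  exists x; first by rewrite inE eqxx.
  by rewrite ler_norml; apply/andP; split; lra.
have := Hr _ _ Hxz; rewrite ler_norml => /andP [_ h2].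
have [y Hy Hy'] := IH z Hp ltac:(lra) H2.
by exists y => //; rewrite inE Hy orbT.
Qed.

Definition psi (d u : R) : R := if u <= d then 0 else (u - d) ^+ 2 / 2.

Lemma psi_ge0 d u : 0 <= psi d u.
Proof. rewrite /psi; case: ifP => // _; apply: divr_ge0 => //; exact: sqr_ge0. Qed.

Lemma psi_lb d u : 0 <= d -> 0 <= u -> (u ^+ 2 - 2 * u * d) / 2 <= psi d u.
Proof.
move=> hd hu; rewrite /psi; case: ifP => H.
  rewrite -(mul0r (2^-1)) ler_pM2r ?invr_gt0 //; nra.
by rewrite ler_pM2r ?invr_gt0 //; nra.
Qed.

Lemma psi_4pt d x a b :
  psi d x + psi d (x + a + b) <= psi d (x + a) + psi d (x + b) + Num.max 0 (a * b).
Proof.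
rewrite /psi.
have hm1 : 0 <= Num.max 0 (a * b) by rewrite le_max lexx.
have hm2 : a * b <= Num.max 0 (a * b) by rewrite le_max lexx orbT.
case: (lerP x d) => H1; case: (lerP (x + a + b) d) => H2;
  case: (lerP (x + a) d) => H3; case: (lerP (x + b) d) => H4; nra.
Qed.

End Gen.
Section S2.
Variable R : realType.
Definition G (m a b : R) := a * (m - b) + b * (m - a) + (a + b) * (2 * m - (a + b)) / 2.

Lemma G_sub m aI bI pa pb qa qb :
  0 <= pa -> 0 <= pb -> 0 <= qa -> 0 <= qb ->
  G m aI bI + G m (aI + pa + qa) (bI + pb + qb) + (pa + pb) * (qa + qb)
  <= G m (aI + pa) (bI + pb) + G m (aI + qa) (bI + qb).
Proof. move=> *; rewrite /G; nra. Qed.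

Lemma prod_le (pu qu pk qk : R) : `|pu| <= pk -> `|qu| <= qk -> Num.max 0 (pu * qu) <= pk * qk.
Proof.
move=> h1 h2; rewrite ge_max; apply/andP; split.
  apply: mulr_ge0; [exact: le_trans (normr_ge0 _) h1| exact: le_trans (normr_ge0 _) h2].
apply: le_trans (ler_norm _) _; rewrite normrM.
by apply: ler_pM => //; exact: normr_ge0.
Qed.
End S2.
Section S3.
Variable R : realType.
Variable n : nat.
Implicit Types (S T : {set 'I_n}) (w : 'I_n -> R).

Definition ind S e : R := ((e \in S) : bool)%:R.
Definition L w S := \sum_e ind S e * w e.

Lemma L_mod w S T : L w (S :&: T) + L w (S :|: T) = L w S + L w T.
Proof.
rewrite /L -!big_split /=; apply: eq_bigr => e _.
rewrite /ind !inE; case: (e \in S); case: (e \in T) => /=; lra.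
Qed.

Lemma L_diff w S T : L w S - L w (S :&: T) = \sum_e (ind S e - ind (S :&: T) e) * w e.
Proof.
rewrite /L -sumrB; apply: eq_bigr => e _; by rewrite mulrBl.
Qed.

Lemma ind_diff S T e : 0 <= ind S e - ind (S :&: T) e.
Proof. rewrite /ind !inE; case: (e \in S); case: (e \in T) => /=; lra. Qed.

Lemma L_mono w S T : (forall e, 0 <= w e) -> L w (S :&: T) <= L w S.
Proof.
move=> hw; rewrite -subr_ge0 L_diff; apply: sumr_ge0 => e _.
by apply: mulr_ge0; [exact: ind_diff| exact: hw].
Qed.

Lemma L_lip w S T : (forall e, `|w e| <= 1) ->
  `|L w S - L w (S :&: T)| <= L (fun _ => 1) S - L (fun _ => 1) (S :&: T).
Proof.
move=> hw; rewrite !L_diff; apply: le_trans (ler_norm_sum _ _ _) _.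
apply: ler_sum => e _; rewrite normrM mulr1 ger0_norm ?ind_diff //.
by rewrite -[X in _ <= X]mulr1; apply: ler_wpM2l; [exact: ind_diff| exact: hw].
Qed.

Lemma L_add w1 w2 S : L (fun e => w1 e + w2 e) S = L w1 S + L w2 S.
Proof. by rewrite /L -big_split; apply: eq_bigr => e _; rewrite mulrDr. Qed.

Lemma L_ge0 w S : (forall e, 0 <= w e) -> 0 <= L w S.
Proof. move=> hw; apply: sumr_ge0 => e _; apply: mulr_ge0 => //; rewrite /ind; case: (_ \in _) => //=. Qed.

Lemma L_le_full w S : (forall e, 0 <= w e) -> L w S <= \sum_e w e.
Proof.
move=> hw; apply: ler_sum => e _; rewrite /ind; case: (_ \in _) => /=; rewrite ?mul1r ?mul0r //.
Qed.

Lemma card_L (S : {set 'I_n}) : (#|S|)%:R = L (fun _ => 1) S.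
Proof.
rewrite /L /ind -sum1_card natr_sum [in RHS](bigID (fun e => e \in S)) /=.
rewrite [X in _ = _ + X]big1 ?addr0; last by move=> e /negbTE ->; rewrite mul0r.
by apply: eq_bigr => e ->; rewrite mulr1.
Qed.

Lemma symd_card S T : tjar_adj S T -> (#|(S :\: T) :|: (T :\: S)| <= 2)%N.
Proof.
rewrite /tjar_adj => /orP [/andP [/eqP h1 /eqP h2]|/eqP ->] //.
apply: leq_trans (leq_card_setU _ _) _.
rewrite !cardsD [T :&: S]setIC; lia.
Qed.

Lemma adj_L w S T : (forall e, `|w e| <= 1) -> tjar_adj S T -> `|L w S - L w T| <= 2.
Proof.
move=> hw hST.
have -> : L w S - L w T = \sum_e (ind S e - ind T e) * w e.
  by rewrite /L -sumrB; apply: eq_bigr => e _; rewrite mulrBl.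
apply: le_trans (ler_norm_sum _ _ _) _.
apply: (@le_trans _ _ (#|(S :\: T) :|: (T :\: S)|)%:R); last by rewrite ler_nat symd_card.
rewrite card_L; apply: ler_sum => e _; rewrite normrM mulr1 /ind !inE.
case: (e \in S); case: (e \in T) => /=; rewrite ?subrr ?normr0 ?mul0r ?mul1r //;
  rewrite ?subr0 ?sub0r ?normrN normr1 mul1r; exact: hw.
Qed.
End S3.
Arguments ind {R n} S e.
Section Pairs.
Variables (T : Type) (idx : T) (op : Monoid.com_law idx).

Lemma big_pairs_nat N (F : nat -> T) :
  \big[op/idx]_(0 <= e < N.*2) F e = \big[op/idx]_(0 <= i < N) op (F i.*2) (F i.*2.+1).
Proof.
elim: N => [|N IH]; first by rewrite !big_geq.
rewrite doubleS !big_nat_recr //= IH Monoid.mulmA //.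
Qed.

Lemma big_pairs_ord N (F : nat -> T) :
  \big[op/idx]_(e < N.*2) F e = \big[op/idx]_(i < N) op (F i.*2) (F i.*2.+1).
Proof. by rewrite -(big_mkord xpredT F) -(big_mkord xpredT (fun i => op (F i.*2) (F i.*2.+1))) big_pairs_nat. Qed.

Lemma big_halves h (G : nat -> T) :
  \big[op/idx]_(0 <= i < h.*2) G i =
  op (\big[op/idx]_(0 <= i < h) G i) (\big[op/idx]_(0 <= j < h) G (h + j)%N).
Proof.
rewrite (@big_cat_nat _ _ _ h) //=; last by rewrite -addnn leq_addr.
congr (op _ _).
rewrite -{1}[h]add0n big_addn -addnn addnK.
by apply: eq_bigr => i _; rewrite addnC.
Qed.
End Pairs.

Section Count.
Variable R : realType.
Lemma sum_ge h x : \sum_(0 <= i < h) ((x <= i)%N : bool)%:R = (h - x)%:R :> R.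
Proof.
elim: h => [|h IH]; first by rewrite big_geq.
rewrite big_nat_recr //= IH; case: leqP => H; rewrite -natrD; congr (_%:R); lia.
Qed.
Lemma sum_lt h x : \sum_(0 <= i < h) ((i < x)%N : bool)%:R = (minn x h)%:R :> R.
Proof.
elim: h => [|h IH]; first by rewrite big_geq /minn; case: ltnP.
rewrite big_nat_recr //= IH; case: ltnP => H; rewrite -natrD; congr (_%:R); lia.
Qed.
End Count.


Section Inst.
Variable R : realType.
Variable h : nat.
Local Notation n := (h.*2).*2.
Local Notation hs := {ffun 'I_(h.*2) -> bool}.

Definition sb (s : hs) (i : nat) : bool :=
  if (insub i : option 'I_(h.*2)) is Some j then s j else false.

Lemma sb_val s (j : 'I_(h.*2)) : sb s j = s j.
Proof. by rewrite /sb valK. Qed.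

Definition cC (s : hs) (e : nat) : bool := odd e == sb s (e./2).

Definition M (t i : nat) (c : bool) : bool :=
  if (i < h)%N then (if c then (t - h <= i)%N else (t <= i)%N)
  else (if c then (i - h < t)%N else (i - h < t - h)%N).

Definition PS (s : hs) (t : nat) : {set 'I_n} := [set e : 'I_n | M t (e./2) (cC s e)].

Lemma sum_pc (F : nat -> bool -> R) s :
  \sum_(e : 'I_n) F (e./2) (cC s e) = \sum_(0 <= i < h.*2) (F i true + F i false).
Proof.
rewrite (@big_pairs_ord _ _ _ (h.*2) (fun e => F (e./2) (cC s e))) -(big_mkord xpredT (fun i => F (i.*2)./2 (cC s i.*2) + F (i.*2.+1)./2 (cC s i.*2.+1))).
apply: eq_bigr => i _; rewrite /cC /= doubleK uphalf_double odd_double /=.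
by case: (sb s i) => //=; rewrite addrC.
Qed.

Lemma sum_halves (G : nat -> R) :
  \sum_(0 <= i < h.*2) G i = \sum_(0 <= i < h) G i + \sum_(0 <= j < h) G (h + j)%N.
Proof. exact: big_halves. Qed.

Definition wa (e : 'I_n) : R := ((e./2 < h)%N : bool)%:R.
Definition wb (e : 'I_n) : R := (~~ (e./2 < h)%N : bool)%:R.
Definition w1 (e : 'I_n) : R := 1.
Definition wu (s : hs) (e : 'I_n) : R := if cC s e then 1 else -1.

Lemma ind_PS s t e : @ind R _ (PS s t) e = (M t (e./2) (cC s e) : bool)%:R.
Proof. by rewrite /ind inE. Qed.

Lemma La_PS s t : (t <= h.*2)%N -> L wa (PS s t) = (h.*2 - t)%:R.
Proof.
move=> ht; pose F := fun (i : nat) (c : bool) => ((M t i c : bool)%:R * ((i < h)%N : bool)%:R : R).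
rewrite /L; transitivity (\sum_(e : 'I_n) F (e./2) (cC s e)).
  by apply: eq_bigr => e _; rewrite /F ind_PS.
rewrite sum_pc sum_halves /F.
rewrite [X in _ + X = _]big1_seq ?addr0; last first.
  by move=> j _ /=; rewrite ltnNge leq_addr /= !mulr0 addr0.
rewrite (eq_big_nat _ _ (F2 := fun i => ((t - h <= i)%N : bool)%:R + ((t <= i)%N : bool)%:R)); last first.
  by move=> i /andP [_ hi]; rewrite /M hi !mulr1.
rewrite big_split /= !sum_ge -natrD; congr (_%:R); lia.
Qed.

Lemma Lb_PS s t : (t <= h.*2)%N -> L wb (PS s t) = t%:R.
Proof.
move=> ht; pose F := fun (i : nat) (c : bool) => ((M t i c : bool)%:R * (~~ (i < h)%N : bool)%:R : R).
rewrite /L; transitivity (\sum_(e : 'I_n) F (e./2) (cC s e)).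
  by apply: eq_bigr => e _; rewrite /F ind_PS.
rewrite sum_pc sum_halves /F.
rewrite [X in X + _ = _]big1_seq ?add0r; last first.
  by move=> j /andP [_]; rewrite mem_index_iota => /andP [_ hj]; rewrite hj /= !mulr0 addr0.
rewrite (eq_big_nat _ _ (F2 := fun j => ((j < t)%N : bool)%:R + ((j < t - h)%N : bool)%:R)); last first.
  by move=> j _; rewrite /M ltnNge leq_addr /= addKn !mulr1.
rewrite big_split /= !sum_lt -natrD; congr (_%:R); lia.
Qed.

Lemma Lu_PS s t : (t <= h.*2)%N -> L (wu s) (PS s t) = (2 * minn t (h.*2 - t))%:R.
Proof.
move=> ht; pose F := fun (i : nat) (c : bool) => ((M t i c : bool)%:R * (if c then 1 else -1) : R).
rewrite /L; transitivity (\sum_(e : 'I_n) F (e./2) (cC s e)).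
  by apply: eq_bigr => e _; rewrite /F ind_PS.
rewrite sum_pc sum_halves /F.
rewrite [X in X + _](eq_big_nat _ _ (F2 := fun i => ((t - h <= i)%N : bool)%:R - ((t <= i)%N : bool)%:R)); last first.
  by move=> i /andP [_ hi]; rewrite /M hi mulr1 mulrN1.
rewrite [X in _ + X](eq_big_nat _ _ (F2 := fun j => ((j < t)%N : bool)%:R - ((j < t - h)%N : bool)%:R)); last first.
  by move=> j _; rewrite /M ltnNge leq_addr /= addKn mulr1 mulrN1.
rewrite !sumrB !sum_ge !sum_lt.
have E : ((h - (t - h)) + minn t h = 2 * minn t (h.*2 - t) + (h - t) + minn (t - h) h)%N by lia.
move: (congr1 (fun x => x%:R : R) E); rewrite !natrD => E'; lra.
Qed.

Lemma L1_PSI s t : (t < h.*2)%N -> L w1 (PS s t :&: PS s t.+1) = (h.*2 - 1)%:R.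
Proof.
move=> ht.
pose F := fun (i : nat) (c : bool) => (((M t i c && M t.+1 i c : bool)%:R * 1 : R) : R).
rewrite /L; transitivity (\sum_(e : 'I_n) F (e./2) (cC s e)).
  by apply: eq_bigr => e _; rewrite /F /ind !inE.
rewrite sum_pc sum_halves /F.
have e1 i : ((t - h <= i)%N && (t.+1 - h <= i)%N) = (t.+1 - h <= i)%N.
  by apply/idP/idP => [/andP[]//|H]; apply/andP; split => //; lia.
have e2 i : ((t <= i)%N && (t.+1 <= i)%N) = (t.+1 <= i)%N.
  by apply/idP/idP => [/andP[]//|H]; apply/andP; split => //; lia.
have e3 i : ((i < t)%N && (i < t.+1)%N) = (i < t)%N.
  by apply/idP/idP => [/andP[]//|H]; apply/andP; split => //; lia.
have e4 i : ((i < t - h)%N && (i < t.+1 - h)%N) = (i < t - h)%N.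
  by apply/idP/idP => [/andP[]//|H]; apply/andP; split => //; lia.
rewrite [X in X + _](eq_big_nat _ _ (F2 := fun i => ((t.+1 - h <= i)%N : bool)%:R + ((t.+1 <= i)%N : bool)%:R)); last first.
  by move=> i /andP [_ hi]; rewrite /M hi !mulr1 e1 e2.
rewrite [X in _ + X](eq_big_nat _ _ (F2 := fun j => ((j < t)%N : bool)%:R + ((j < t - h)%N : bool)%:R)); last first.
  by move=> j _; rewrite /M ltnNge leq_addr /= addKn !mulr1 e3 e4.
rewrite !big_split /= !sum_ge !sum_lt -!natrD; congr (_%:R); lia.
Qed.

End Inst.


Section Inst2.
Variable R : realType.
Variable h : nat.
Local Notation n := (h.*2).*2.
Local Notation hs := {ffun 'I_(h.*2) -> bool}.

Definition Xs : {set 'I_n} := [set e : 'I_n | (e./2 < h)%N].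
Definition Ys : {set 'I_n} := [set e : 'I_n | ~~ (e./2 < h)%N].

Lemma PS0 (s : hs) : PS s 0 = Xs.
Proof.
apply/setP => e; rewrite !inE /M.
by case: ifP => _; case: (cC s e); rewrite ?sub0n ?leq0n.
Qed.

Lemma PSN (s : hs) : PS s h.*2 = Ys.
Proof.
apply/setP => e; rewrite !inE /M.
have he : (e./2 < h.*2)%N by rewrite ltn_half_double.
case: ifP => hi /=; case: (cC s e) => //; lia.
Qed.

Lemma L1_PS (s : hs) t : (t <= h.*2)%N -> L (fun _ => 1) (PS s t) = (h.*2)%:R :> R.
Proof.
move=> ht.
have <- : L (fun e => wa R e + wb R e) (PS s t) = L (fun _ => 1) (PS s t).
  by rewrite /L; apply: eq_bigr => e _; rewrite /wa /wb; case: (_ < _)%N; rewrite /= ?addr0 ?add0r.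
rewrite L_add La_PS // Lb_PS // -natrD; congr (_%:R); lia.
Qed.

Lemma card_PS (s : hs) t : (t <= h.*2)%N -> #|PS s t| = h.*2.
Proof. by move=> ht; apply/eqP; rewrite -(eqr_nat R) card_L L1_PS. Qed.

Lemma adj_PS (s : hs) t : (t < h.*2)%N -> tjar_adj (PS s t) (PS s t.+1).
Proof.
move=> ht; rewrite /tjar_adj card_PS ?card_PS //; last exact: ltnW.
have : #|PS s t :&: PS s t.+1| = (h.*2 - 1)%N.
  by apply/eqP; rewrite -(eqr_nat R) card_L (L1_PSI R).
move=> ->; rewrite eqxx /=; apply/orP; left; apply/eqP; lia.
Qed.

Definition f0 (S : {set 'I_n}) : R := G ((h.*2)%:R) (L (@wa R h) S) (L (@wb R h) S).
Definition fs (s : hs) (d : R) (S : {set 'I_n}) : R := f0 S + psi d (L (@wu R h s) S).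

Lemma val_PS (s : hs) d t : (t <= h.*2)%N -> 0 <= d ->
  6 * h%:R ^+ 2 - (2 * h%:R + d) ^+ 2 / 4 <= fs s d (PS s t).
Proof.
move=> ht hd; rewrite /fs /f0 La_PS // Lb_PS // Lu_PS //.
have hH : (h.*2)%:R = 2 * h%:R :> R by rewrite -addnn natrD; ring.
set x := minn t (h.*2 - t).
have hx : (x <= h)%N by rewrite /x; lia.
have hx' : 0 <= x%:R :> R by [].
have hxH : x%:R <= h%:R :> R by rewrite ler_nat.
have hp := psi_lb hd (_ : 0 <= 2 * x%:R); rewrite natrM.
have {hp} hp := hp ltac:(by apply: mulr_ge0).
have [E1 E2] : (h.*2 - t)%:R = (h.*2)%:R - t%:R :> R /\ (x = t \/ x = h.*2 - t)%N.
  by split; [rewrite natrB | rewrite /x; lia].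
rewrite E1 hH; rewrite /G.
case: E2 => E2.
- have et : t%:R = x%:R :> R by rewrite E2.
  rewrite et; have := sqr_ge0 (2 * x%:R - (2 * h%:R + d) / 2); nra.
- have et : t%:R = 2 * h%:R - x%:R :> R by rewrite E2 natrB // hH; lra.
  rewrite et; have := sqr_ge0 (2 * x%:R - (2 * h%:R + d) / 2); nra.
Qed.

Lemma path_fun (T : Type) (r : rel T) (f : nat -> T) N :
  (forall t, (t < N)%N -> r (f t) (f t.+1)) -> path r (f 0%N) (map f (iota 1 N)).
Proof.
move=> H.
suff : forall N' k, (k + N' <= N)%N -> path r (f k) (map f (iota k.+1 N')).
  by move=> /(_ N 0%N); apply.
elim=> [|N' IH] k hk //=.
rewrite H; last by lia.
by rewrite IH //; lia.
Qed.

Lemma last_iota k N : last k (iota k.+1 N) = (k + N)%N.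
Proof. by elim: N k => [|N IH] k /=; rewrite ?addn0 // IH addnS. Qed.

Definition gpath (s : hs) := PS s 0 :: map (PS s) (iota 1 h.*2).

Lemma gpath_reco (s : hs) : is_reco Xs Ys (gpath s).
Proof.
exists (map (PS s) (iota 1 h.*2)); split; first by rewrite /gpath PS0.
split; first by rewrite -(PS0 s); apply: path_fun => t ht; exact: adj_PS.
by rewrite -(PS0 s) last_map last_iota add0n PSN.
Qed.

Lemma gpath_val (s : hs) d : 0 <= d ->
  6 * h%:R ^+ 2 - (2 * h%:R + d) ^+ 2 / 4 <= seqval (fs s d) (gpath s).
Proof.
move=> hd; apply: seqval_ge => y; rewrite inE => /orP [/eqP ->|].
  exact: val_PS.
by move=> /mapP [t]; rewrite mem_iota => /andP [_ ht] ->; apply: val_PS => //; lia.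
Qed.

End Inst2.


Section Inst3.
Variable R : realType.
Variable h : nat.
Local Notation n := (h.*2).*2.
Local Notation hs := {ffun 'I_(h.*2) -> bool}.

Lemma sum_wa : \sum_(e : 'I_n) @wa R h e = (h.*2)%:R.
Proof.
pose s : hs := [ffun => false].
pose F := fun (i : nat) (c : bool) => (((i < h)%N : bool)%:R : R).
transitivity (\sum_(e : 'I_n) F (e./2) (cC s e)) => //.
rewrite sum_pc sum_halves /F.
rewrite [X in _ + X]big1_seq ?addr0; last by move=> j _ /=; rewrite ltnNge leq_addr /= addr0.
rewrite (eq_big_nat _ _ (F2 := fun i => 2)); last by move=> i /andP [_ ->].
rewrite sumr_const_nat subn0 -addnn natrD; ring.
Qed.

Lemma sum_wb : \sum_(e : 'I_n) @wb R h e = (h.*2)%:R.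
Proof.
pose s : hs := [ffun => false].
pose F := fun (i : nat) (c : bool) => ((~~ (i < h)%N : bool)%:R : R).
transitivity (\sum_(e : 'I_n) F (e./2) (cC s e)) => //.
rewrite sum_pc sum_halves /F.
rewrite [X in X + _]big1_seq ?add0r; last first.
  by move=> j /andP [_]; rewrite mem_index_iota => /andP [_ ->] /=; rewrite addr0.
rewrite (eq_big_nat _ _ (F2 := fun i => 2)); last by move=> i _ /=; rewrite ltnNge leq_addr.
rewrite sumr_const_nat subn0 -addnn natrD; ring.
Qed.

Lemma La_bd S : 0 <= L (@wa R h) S <= (h.*2)%:R.
Proof.
rewrite L_ge0 /=; last by move=> e; rewrite /wa; case: (_ < _)%N.
rewrite -sum_wa; apply: L_le_full => e; rewrite /wa; case: (_ < _)%N => //.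
Qed.

Lemma Lb_bd S : 0 <= L (@wb R h) S <= (h.*2)%:R.
Proof.
rewrite L_ge0 /=; last by move=> e; rewrite /wb; case: (_ < _)%N.
rewrite -sum_wb; apply: L_le_full => e; rewrite /wb; case: (_ < _)%N => //.
Qed.

Lemma f0_nonneg : nonneg (@f0 R h).
Proof.
move=> S; rewrite /f0 /G.
have /andP [a0 a1] := La_bd S; have /andP [b0 b1] := Lb_bd S.
set a := L _ S in a0 a1 *; set b := L _ S in b0 b1 *; set m := (h.*2)%:R in a1 b1 *.
nra.
Qed.

Lemma fs_nonneg s d : nonneg (@fs R h s d).
Proof. move=> S; rewrite /fs; apply: addr_ge0; [exact: f0_nonneg|exact: psi_ge0]. Qed.

Lemma Lk (S : {set 'I_n}) : L (fun _ => 1) S = L (@wa R h) S + L (@wb R h) S.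
Proof.
rewrite -L_add; rewrite /L; apply: eq_bigr => e _; rewrite /wa /wb.
by case: (_ < _)%N; rewrite /= ?addr0 ?add0r.
Qed.

Lemma wu_bd (s : hs) e : `|@wu R h s e| <= 1.
Proof. by rewrite /wu; case: (cC _ _); rewrite ?normrN normr1. Qed.

Lemma fs_sub s d : submodular (@fs R h s d).
Proof.
move=> S T; rewrite /fs /f0.
set m := (h.*2)%:R.
have wa0 : forall e, 0 <= @wa R h e by move=> e; rewrite /wa; case: (_ < _)%N.
have wb0 : forall e, 0 <= @wb R h e by move=> e; rewrite /wb; case: (_ < _)%N.
have Ma := L_mod (@wa R h) S T; have Mb := L_mod (@wb R h) S T.
have Mu := L_mod (@wu R h s) S T.
have pa := L_mono S T wa0; have qa := L_mono T S wa0.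
have pb := L_mono S T wb0; have qb := L_mono T S wb0.
have pu := L_lip S T (wu_bd s); have qu := L_lip T S (wu_bd s).
rewrite setIC in qa qb qu; rewrite !Lk in pu qu.
set aS := L _ S in Ma pa pu *; set aT := L _ T in Ma qa qu *.
set aI := L (@wa R h) (S :&: T) in Ma pa qa pu qu *.
set aJ := L (@wa R h) (S :|: T) in Ma *.
set bS := L (@wb R h) S in Mb pb pu *; set bT := L (@wb R h) T in Mb qb qu *.
set bI := L (@wb R h) (S :&: T) in Mb pb qb pu qu *.
set bJ := L (@wb R h) (S :|: T) in Mb *.
set uS := L (@wu R h s) S in Mu pu *; set uT := L (@wu R h s) T in Mu qu *.
set uI := L (@wu R h s) (S :&: T) in Mu pu qu *.
set uJ := L (@wu R h s) (S :|: T) in Mu *.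
have H1 := G_sub m aI bI (pa := aS - aI) (pb := bS - bI) (qa := aT - aI) (qb := bT - bI).
have H2 := psi_4pt d uI (uS - uI) (uT - uI).
have H3 := prod_le pu qu.
have eJa : aJ = aI + (aS - aI) + (aT - aI) by lra.
have eJb : bJ = bI + (bS - bI) + (bT - bI) by lra.
have eJu : uJ = uI + (uS - uI) + (uT - uI) by lra.
have e1 : aI + (aS - aI) = aS by ring.
have e2 : aI + (aT - aI) = aT by ring.
have e3 : bI + (bS - bI) = bS by ring.
have e4 : bI + (bT - bI) = bT by ring.
have e5 : uI + (uS - uI) = uS by ring.
have e6 : uI + (uT - uI) = uT by ring.
rewrite -eJa -eJb e1 e2 e3 e4 in H1; rewrite -eJu e5 e6 in H2.
have : (aS + bS - (aI + bI)) * (aT + bT - (aI + bI)) = (aS - aI + (bS - bI)) * (aT - aI + (bT - bI)) by ring.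
move=> E; rewrite E in H3.
have := H1 ltac:(lra) ltac:(lra) ltac:(lra) ltac:(lra).
lra.
Qed.

Lemma f0_sub : submodular (@f0 R h).
Proof.
move=> S T; rewrite /f0.
set m := (h.*2)%:R.
have wa0 : forall e, 0 <= @wa R h e by move=> e; rewrite /wa; case: (_ < _)%N.
have wb0 : forall e, 0 <= @wb R h e by move=> e; rewrite /wb; case: (_ < _)%N.
have Ma := L_mod (@wa R h) S T; have Mb := L_mod (@wb R h) S T.
have pa := L_mono S T wa0; have qa := L_mono T S wa0.
have pb := L_mono S T wb0; have qb := L_mono T S wb0.
rewrite setIC in qa qb.
set aS := L _ S in Ma pa *; set aT := L _ T in Ma qa *.
set aI := L (@wa R h) (S :&: T) in Ma pa qa *.
set aJ := L (@wa R h) (S :|: T) in Ma *.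
set bS := L (@wb R h) S in Mb pb *; set bT := L (@wb R h) T in Mb qb *.
set bI := L (@wb R h) (S :&: T) in Mb pb qb *.
set bJ := L (@wb R h) (S :|: T) in Mb *.
have H1 := G_sub m aI bI (pa := aS - aI) (pb := bS - bI) (qa := aT - aI) (qb := bT - bI).
have eJa : aJ = aI + (aS - aI) + (aT - aI) by lra.
have eJb : bJ = bI + (bS - bI) + (bT - bI) by lra.
have e1 : aI + (aS - aI) = aS by ring.
have e2 : aI + (aT - aI) = aT by ring.
have e3 : bI + (bS - bI) = bS by ring.
have e4 : bI + (bT - bI) = bT by ring.
rewrite -eJa -eJb e1 e2 e3 e4 in H1.
have := H1 ltac:(lra) ltac:(lra) ltac:(lra) ltac:(lra).
have : 0 <= (aS - aI + (bS - bI)) * (aT - aI + (bT - bI)) by apply: mulr_ge0; lra.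
lra.
Qed.

Definition wd (e : 'I_n) : R := @wa R h e - @wb R h e.

Lemma wd_bd e : `|wd e| <= 1.
Proof. by rewrite /wd /wa /wb; case: (_ < _)%N; rewrite /= ?subr0 ?sub0r ?normrN normr1. Qed.

Lemma Ld (S : {set 'I_n}) : L wd S = L (@wa R h) S - L (@wb R h) S.
Proof. by rewrite /L -sumrB; apply: eq_bigr => e _; rewrite /wd mulrBr. Qed.

Lemma f0_cross (S : {set 'I_n}) : `|L wd S| <= 1 -> @f0 R h S <= (h.*2)%:R ^+ 2 + 1 / 2.
Proof.
rewrite Ld /f0 /G => H.
set a := L _ S in H *; set b := L _ S in H *; set m := (h.*2)%:R.
have : (b - a) ^+ 2 <= 1.
  move: H; rewrite ler_norml => /andP [h1 h2]; nra.
have := sqr_ge0 (m - (a + b)).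
nra.
Qed.

End Inst3.


Section Cnt.
Variable R : realType.

Lemma expR_le_inv (r : R) : r < 1 -> expR r <= (1 - r)^-1.
Proof.
move=> hr.
have h1 : 1 - r <= expR (- r) by have := expR_ge1Dx (- r); lra.
have -> : expR r = (expR (- r))^-1 by rewrite expRN invrK.
by rewrite lef_pV2 ?posrE ?expR_gt0 ?subr_gt0.
Qed.

Lemma cosh_bd (rho w : R) : 0 <= rho -> rho < 1 -> (w = 0 \/ w = 1 \/ w = -1) ->
  expR (rho * w) + expR (rho * - w) <= 2 / (1 - rho ^+ 2).
Proof.
move=> h0 h1 hw.
have hp : 0 < 1 - rho ^+ 2 by nra.
have E : (1 - rho)^-1 + (1 - - rho)^-1 = 2 / (1 - rho ^+ 2).
  by field; rewrite !lt0r_neq0 //; lra.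
have e1 := expR_le_inv h1.
have e2 := @expR_le_inv (- rho) ltac:(lra).
case: hw => [->|[->|->]].
- rewrite oppr0 mulr0 expR0; rewrite ler_pdivlMr //; nra.
- rewrite mulr1 mulrN1 -E; lra.
- rewrite opprK mulr1 mulrN1 -E; lra.
Qed.

End Cnt.

Section Cnt2.
Variable R : realType.
Variable h : nat.
Local Notation n := (h.*2).*2.
Local Notation hs := {ffun 'I_(h.*2) -> bool}.

Definition indn (Q : {set 'I_n}) (k : nat) : R :=
  if (insub k : option 'I_n) is Some e then ind Q e else 0.
Definition wun (s : hs) (k : nat) : R := if cC s k then 1 else -1.

Lemma indn01 Q k : indn Q k = 0 \/ indn Q k = 1.
Proof. rewrite /indn; case: insub => [e|]; last by left. rewrite /ind; case: (_ \in _); auto. Qed.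

Lemma Lu_n (s : hs) Q : L (@wu R h s) Q = \sum_(e < n) indn Q e * wun s e.
Proof. by apply: eq_bigr => e _; rewrite /indn valK. Qed.

Definition Fi (Q : {set 'I_n}) (rho : R) (i : nat) (b : bool) : R :=
  expR (rho * (if b then indn Q i.*2.+1 - indn Q i.*2 else indn Q i.*2 - indn Q i.*2.+1)).

Lemma mgf_eq (Q : {set 'I_n}) rho :
  \sum_(s : hs) expR (rho * L (@wu R h s) Q) = \prod_(i : 'I_(h.*2)) (Fi Q rho i true + Fi Q rho i false).
Proof.
transitivity (\sum_(s : hs) \prod_(i : 'I_(h.*2)) Fi Q rho i (s i)); last first.
  rewrite [RHS](eq_bigr (fun i : 'I_(h.*2) => \sum_(b : bool) Fi Q rho i b)); last first.
    by move=> i _; rewrite big_bool.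
  by rewrite bigA_distr_bigA.
apply: eq_bigr => s _.
transitivity (\prod_(i < h.*2) Fi Q rho i (sb s i)); last by apply: eq_bigr => i _; rewrite sb_val.
rewrite -(big_mkord xpredT (fun i => Fi Q rho i (sb s i))).
rewrite Lu_n mulr_sumr expR_sum.
rewrite (@big_pairs_ord R 1 *%R (h.*2) (fun e => expR (rho * (indn Q e * wun s e)))).
rewrite -(big_mkord xpredT (fun i => expR (rho * (indn Q i.*2 * wun s i.*2)) * expR (rho * (indn Q i.*2.+1 * wun s i.*2.+1)))).
apply: eq_bigr => i _; rewrite -expRD /Fi /wun /cC /= ?doubleK ?uphalf_double ?odd_double /=.
case: (sb s i) => /=; congr expR; ring.
Qed.
Lemma bad_count (Q : {set 'I_n}) (rho d : R) : 0 <= rho -> rho < 1 ->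
  \sum_(s : hs) ((d < L (@wu R h s) Q)%R : bool)%:R <=
  expR (- (rho * d)) * (2 / (1 - rho ^+ 2)) ^+ h.*2.
Proof.
move=> h0 h1.
apply: (@le_trans _ _ (\sum_(s : hs) expR (- (rho * d)) * expR (rho * L (@wu R h s) Q))).
  apply: ler_sum => s _; rewrite -expRD.
  case: ltP => H /=; last exact: expR_ge0.
  apply: le_trans (expR_ge1Dx _); rewrite lerDl; nra.
rewrite -mulr_sumr mgf_eq ler_pM2l ?expR_gt0 //.
apply: (@le_trans _ _ (\prod_(i : 'I_(h.*2)) (2 / (1 - rho ^+ 2)))); last by rewrite prodr_const card_ord.
apply: ler_prod => i _.
apply/andP; split; first by apply: addr_ge0; apply: expR_ge0.
rewrite /Fi -opprB.
rewrite addrC; apply: cosh_bd => //.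
case: (indn01 Q i.*2.+1) => ->; case: (indn01 Q i.*2) => ->;
  rewrite ?subrr ?subr0 ?sub0r; auto.
Qed.

Lemma sum_seq_ge (T : eqType) (r : seq T) (F : T -> R) x :
  (forall y, 0 <= F y) -> x \in r -> F x <= \sum_(y <- r) F y.
Proof.
move=> H; elim: r => [|y r IH] //=; rewrite big_cons inE => /orP [/eqP ->|Hx].
  by rewrite lerDl; apply: sumr_ge0.
by apply: le_trans (IH Hx) _; rewrite lerDr.
Qed.

Lemma exists_good (Qs : seq {set 'I_n}) (bad : {set 'I_n} -> hs -> bool) :
  \sum_(Q <- Qs) \sum_(s : hs) (bad Q s)%:R < (#|hs|)%:R :> R ->
  exists s : hs, forall Q, Q \in Qs -> ~~ bad Q s.
Proof.
move=> H.
case: (pickP (fun s : hs => all (fun Q => ~~ bad Q s) Qs)) => [s Hs|Hn].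
  by exists s => Q HQ; move/allP: Hs; apply.
exfalso; move: H; apply/negP; rewrite -leNgt exchange_big /=.
rewrite -sum1_card natr_sum; apply: ler_sum => s _.
move: (Hn s) => /negbT; rewrite -has_predC => /hasP [Q HQ] /= /negPn HQb.
have H1 := @sum_seq_ge _ Qs (fun Q => ((bad Q s) : bool)%:R : R) Q ltac:(by move=> y; case: (bad y s)) HQ.
by apply: le_trans H1; rewrite HQb.
Qed.
End Cnt2.


Lemma count_num (R : realType) (K h : nat) (eps : R) : 0 < eps -> eps <= 1/6 ->
  7 / eps ^+ 2 < h%:R -> K%:R <= expR (eps ^+ 2 * ((h.*2).*2)%:R / 2) ->
  (K.+1)%:R * (expR (- (eps * (21 / 5 * eps * h%:R))) * (2 / (1 - eps ^+ 2)) ^+ h.*2)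
   < (2 ^ h.*2)%:R.
Proof.
move=> e0 e1 hN hK.
have hH : (h.*2)%:R = 2 * h%:R :> R by rewrite -addnn natrD; ring.
have hH4 : ((h.*2).*2)%:R = 4 * h%:R :> R by rewrite -addnn natrD hH; ring.
rewrite hH4 in hK.
have p1 : 0 < 1 - eps ^+ 2 by nra.
have i1 : (1 - eps ^+ 2)^-1 <= expR (36 / 35 * eps ^+ 2).
  have j1 : (1 - eps ^+ 2)^-1 = 1 + eps ^+ 2 / (1 - eps ^+ 2).
    by field; rewrite lt0r_neq0.
  rewrite j1; apply: le_trans (expR_ge1Dx _) _.
  rewrite ler_expR ler_pdivrMr //.
  have t1 : eps ^+ 2 <= 1 / 36 by nra.
  have t2 : 0 <= eps ^+ 2 by apply: sqr_ge0.
  nra.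
have i2 : (2 / (1 - eps ^+ 2)) ^+ h.*2 <= 2 ^+ h.*2 * expR ((h.*2)%:R * (36 / 35 * eps ^+ 2)).
  rewrite expRM_natl -exprMn; apply: lerXn2r.
  - by rewrite nnegrE; apply: divr_ge0 => //; apply: ltW.
  - by rewrite nnegrE; apply: mulr_ge0 => //; apply: expR_ge0.
  by rewrite ler_pM2l.
have i3 : (K.+1)%:R <= 2 * expR (eps ^+ 2 * (4 * h%:R) / 2) :> R.
  have : 1 <= expR (eps ^+ 2 * (4 * h%:R) / 2).
    apply: le_trans (expR_ge1Dx _); rewrite lerDl.
    have := sqr_ge0 eps; have := ler0n R h; nra.
  move=> t; rewrite -natr1; lra.
have e3 : expR (eps ^+ 2 * (4 * h%:R) / 2) * expR (- (eps * (21 / 5 * eps * h%:R))) *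
   expR ((h.*2)%:R * (36 / 35 * eps ^+ 2)) = expR (- (eps ^+ 2 * h%:R / 7)).
  by rewrite -!expRD hH; congr expR; field.
have e4 : 2 < expR (eps ^+ 2 * h%:R / 7).
  apply: lt_le_trans (expR_ge1Dx _).
  have : 7 < eps ^+ 2 * h%:R.
    by rewrite -ltr_pdivrMl ?exprn_gt0 // mulrC.
  lra.
have e5 : expR (- (eps ^+ 2 * h%:R / 7)) < 1 / 2.
  rewrite expRN -div1r ltr_pdivrMr ?expR_gt0 //; lra.
rewrite natrX.
have q0 : 0 < (2 : R) ^+ h.*2 by apply: exprn_gt0.
have q1 := expR_gt0 (- (eps * (21 / 5 * eps * h%:R))).
apply: (@le_lt_trans _ _ ((2 * expR (eps ^+ 2 * (4 * h%:R) / 2)) *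
   (expR (- (eps * (21 / 5 * eps * h%:R))) * (2 ^+ h.*2 * expR ((h.*2)%:R * (36 / 35 * eps ^+ 2)))))).
  apply: ler_pM.
  - exact: ler0n.
  - apply: mulr_ge0; [exact: expR_ge0 | apply: exprn_ge0; apply: divr_ge0 => //; exact: ltW].
  - exact: i3.
  - by rewrite ler_pM2l.
have -> : 2 * expR (eps ^+ 2 * (4 * h%:R) / 2) *
    (expR (- (eps * (21 / 5 * eps * h%:R))) * (2 ^+ h.*2 * expR ((h.*2)%:R * (36 / 35 * eps ^+ 2))))
  = 2 * 2 ^+ h.*2 * (expR (eps ^+ 2 * (4 * h%:R) / 2) * expR (- (eps * (21 / 5 * eps * h%:R))) *
   expR ((h.*2)%:R * (36 / 35 * eps ^+ 2))) by ring.
rewrite e3.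
nra.
Qed.
Lemma gap_num (R : realType) (e H : R) : 0 < e -> e <= 1/6 -> 2 <= H ->
  (2 * H) ^+ 2 + 1 / 2 < (5 / 6 + e) * (6 * H ^+ 2 - (2 * H + 21 / 5 * e * H) ^+ 2 / 4).
Proof.
move=> e0 e1 hH.
have P : 1 / 6 <= (5 / 6 + e) * (6 - (1 + 21 / 10 * e) ^+ 2) - 4.
  have t1 : e ^+ 2 <= e / 6 by nra.
  have t2 : e ^+ 3 <= e / 36 by rewrite exprS; nra.
  have t3 : 0 <= e ^+ 3 by apply: exprn_ge0; lra.
  rewrite exprS in t2 t3; nra.
have E : (5 / 6 + e) * (6 * H ^+ 2 - (2 * H + 21 / 5 * e * H) ^+ 2 / 4) =
   H ^+ 2 * ((5 / 6 + e) * (6 - (1 + 21 / 10 * e) ^+ 2)).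
  by rewrite !expr2; field.
rewrite E.
have h4 : 4 <= H ^+ 2 by nra.
nra.
Qed.


Unset Implicit Arguments.

Theorem mainTheorem14 (R : realType) (eps : R) (heps : 0 < eps) :
  ~ exists A : forall n : nat, {set 'I_n} -> {set 'I_n} -> alg R n,
      forall (n : nat) (f : {set 'I_n} -> R),
        nonneg f -> submodular f ->
        forall X Y : {set 'I_n},
          let r := run f (A n X Y) in
          (r.2%:R <= expR (eps ^+ 2 * n%:R / 2)) /\
          is_reco X Y r.1 /\
          (forall T, is_reco X Y T -> (5 / 6 + eps) * seqval f T <= seqval f r.1).
Proof.
move=> [A HA].
have [Hbig|Hsmall] := ltrP (1/6) eps.
  pose f := fun _ : {set 'I_0} => 1 : R.
  have hnn : nonneg f by move=> S; rewrite /f.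
  have hsub : submodular f by move=> S T; rewrite /f.
  case: (HA 0%N f hnn hsub set0 set0) => _ [[s0 [E0 _]] happ].
  have T0 : is_reco (set0 : {set 'I_0}) set0 [:: set0] by exists [::].
  have := happ _ T0; rewrite E0.
  have := @seqval_le R 0%N f set0 s0 set0 (mem_head _ _).
  rewrite /= /f => h1 h2; lra.
have e2 : 0 < eps ^+ 2 by rewrite exprn_gt0.
have [N HN] : exists N : nat, 7 / eps ^+ 2 < N%:R.
  exists (Num.bound (7 / eps ^+ 2)); apply: archi_boundP.
  by apply: divr_ge0 => //; apply: ltW.
pose h := N.+2.
have hH : 2 <= h%:R :> R by rewrite ler_nat.
have hN : 7 / eps ^+ 2 < h%:R :> R by apply: (lt_le_trans HN); rewrite ler_nat /h; lia.
pose n := (h.*2).*2.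
pose d := 21 / 5 * eps * h%:R.
have hd : 0 <= d by rewrite /d; apply: mulr_ge0; [apply: mulr_ge0|]; lra.
pose s0 : {ffun 'I_(h.*2) -> bool} := [ffun => false].
case: (HA n (f0 R (h:=h)) (@f0_nonneg R h) (@f0_sub R h) (Xs h) (Ys h)) => hq [hr happ0].
set O := (run _ _).1 in hr happ0.
set K := (run _ _).2 in hq.
have [sq [EO [Hp Hl]]] := hr.
have [Sx HSx HSd] : exists2 Sx, Sx \in O & `|L (wd R (h:=h)) Sx| <= 1.
  rewrite EO; apply: (crossing (r := @tjar_adj n)) Hp _ _.
  - by move=> y z; apply: adj_L; exact: wd_bd.
  - rewrite Ld -(PS0 s0) La_PS // Lb_PS // subn0; have := hH; rewrite -addnn natrD; lra.
  - rewrite Hl Ld -(PSN s0) La_PS // Lb_PS // subnn mulr0n; have := ler0n R (h.*2); lra.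
pose bad := fun (Q : {set 'I_n}) (s : {ffun 'I_(h.*2) -> bool}) => (d < L (@wu R h s) Q)%R.
pose Qs := Sx :: qs (f0 R (h:=h)) (A n (Xs h) (Ys h)).
have Hsum : \sum_(Q <- Qs) \sum_(s : {ffun 'I_(h.*2) -> bool}) ((bad Q s) : bool)%:R
    < (#|{ffun 'I_(h.*2) -> bool}|)%:R :> R.
  apply: (@le_lt_trans _ _ (\sum_(Q <- Qs) (expR (- (eps * d)) * (2 / (1 - eps ^+ 2)) ^+ h.*2))).
    apply: ler_sum => Q _; apply: bad_count; [exact: ltW| lra].
  have -> : forall (c : R) (l : seq {set 'I_n}), \sum_(Q <- l) c = (size l)%:R * c.
    move=> c; elim=> [|x l IH]; first by rewrite big_nil mul0r.
    by rewrite big_cons IH /= -natr1 mulrDl mul1r addrC.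
  rewrite /Qs /= qs_size -/K card_ffun card_bool card_ord.
  by apply: count_num.
have [s Hs] := exists_good Hsum.
have Hnb : forall Q, Q \in Qs -> fs s d Q = f0 R Q.
  move=> Q HQ; have := Hs Q HQ; rewrite /bad -leNgt => Hle.
  by rewrite /fs /psi Hle addr0.
have Erun : run (fs s d) (A n (Xs h) (Ys h)) = run (f0 R (h:=h)) (A n (Xs h) (Ys h)).
  by apply: run_agree => Q HQ; apply: Hnb; rewrite inE HQ orbT.
case: (HA n (fs s d) (fs_nonneg s d) (fs_sub s d) (Xs h) (Ys h)) => _ [_ happ].
rewrite Erun -/O in happ.
have Hg := happ _ (gpath_reco R s).
have Hv := gpath_val s hd.
have Hx : seqval (fs s d) O <= fs s d Sx.
  by move: HSx; rewrite EO => HSx; apply: seqval_le.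
rewrite (Hnb Sx (mem_head _ _)) in Hx.
have Hc := f0_cross HSd.
have hH2 : (h.*2)%:R = 2 * h%:R :> R by rewrite -addnn natrD; ring.
rewrite hH2 in Hc.
have Hgap := @gap_num R eps h%:R heps Hsmall hH.
have Hpos : 0 < 5 / 6 + eps by lra.
have := ler_pM2l Hpos (6 * h%:R ^+ 2 - (2 * h%:R + d) ^+ 2 / 4) (seqval (fs s d) (gpath s)).
rewrite Hv => /esym Hm.
rewrite /d in Hm Hgap.
lra.
Qed.
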